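(* Let $P=\{x\in\mathbb R^d\mid \langle a_i,x\rangle\le b_i,\ 1\le i\le n\}$ be a $d$-dimensional lattice polytope given by an irredundant system with primitive $a_i\in(\mathbb Z^d)^*$, and let $a_1,\dots,a_m$ be its core normals. Then the vertices of $\operatorname{conv}(a_1,\dots,a_m)$ are exactly $a_1,\dots,a_m$ (i.e., no $a_j$, $1\le j\le m$, is a convex combination of the others).
   Context: For rational $c>0$ the adjoint polytope is $P^{(c)}=\{x\mid \langle a_i,x\rangle\le b_i-c,\ 1\le i\le n\}$ (the system being irredundant with primitive normals). The $\mathbb Q$-codegree is defined by $\operatorname{qcd}(P)^{-1}=\max\{c>0\mid P^{(c)}\neq\emptyset\}$. Put $c_0=\operatorname{qcd}(P)^{-1}$ and $\operatorname{core}P=P^{(c_0)}$. A normal $a_i$ is a core normal if $\langle a_i,y\rangle=b_i-c_0$ for all $y\in\operatorname{core}P$; after relabeling, the core normals are $a_1,\dots,a_m$. *)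

(* Defs.v *)
(* Points of R^d are row vectors 'rV[R]_d over an arbitrary
   real field R (generalizing the real numbers); normals are integer row
   vectors 'rV[int]_d. *)
From HB Require Import structures.
From mathcomp Require Import all_boot all_order all_algebra.
Set Implicit Arguments. Unset Strict Implicit. Unset Printing Implicit Defensive.
Import Order.TTheory GRing.Theory Num.Theory.
Local Open Scope ring_scope.

Definition dotv (R : realFieldType) (d : nat) (u x : 'rV[R]_d) : R :=
  \sum_(k < d) u 0 k * x 0 k.

Definition intv (R : realFieldType) (d : nat) (v : 'rV[int]_d) : 'rV[R]_d :=
  map_mx (fun z : int => z%:~R) v.

Definition inP (R : realFieldType) (n d : nat) (a : 'I_n -> 'rV[int]_d)
  (b : 'I_n -> R) (x : 'rV[R]_d) : Prop :=
  forall i, dotv (intv R (a i)) x <= b i.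

Definition inAdj (R : realFieldType) (n d : nat) (a : 'I_n -> 'rV[int]_d)
  (b : 'I_n -> R) (c : R) (x : 'rV[R]_d) : Prop :=
  forall i, dotv (intv R (a i)) x <= b i - c.

Definition irredundant (R : realFieldType) (n d : nat)
  (a : 'I_n -> 'rV[int]_d) (b : 'I_n -> R) : Prop :=
  forall i, exists x : 'rV[R]_d,
    (forall j, j != i -> dotv (intv R (a j)) x <= b j) /\
    b i < dotv (intv R (a i)) x.

Definition primitive (d : nat) (v : 'rV[int]_d) : Prop :=
  \big[gcdz/0]_(k < d) v 0 k = 1.

Definition in_conv (R : realFieldType) (d : nat) (I : finType)
  (s : I -> 'rV[R]_d) (x : 'rV[R]_d) : Prop :=
  exists lam : I -> R, (forall k, 0 <= lam k) /\ \sum_k lam k = 1 /\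
    x = \sum_k lam k *: s k.

Definition lattice_polytope (R : realFieldType) (n d : nat)
  (a : 'I_n -> 'rV[int]_d) (b : 'I_n -> R) : Prop :=
  exists (N : nat) (V : 'I_N -> 'rV[int]_d),
    forall x, inP a b x <-> in_conv (fun k => intv R (V k)) x.

(* P is d-dimensional: it contains d+1 affinely independent points *)
Definition full_dim (R : realFieldType) (n d : nat)
  (a : 'I_n -> 'rV[int]_d) (b : 'I_n -> R) : Prop :=
  exists (x0 : 'rV[R]_d) (X : 'M[R]_d),
    inP a b x0 /\ (forall k, inP a b (x0 + row k X)) /\ row_free X.

(* c0 = qcd(P)^{-1} = max { c > 0 rational | P^(c) nonempty } *)
Definition is_qcd_inv (R : realFieldType) (n d : nat)
  (a : 'I_n -> 'rV[int]_d) (b : 'I_n -> R) (c0 : rat) : Prop :=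
  0 < c0 /\ (exists y, inAdj a b (ratr c0) y) /\
  forall c : rat, 0 < c -> (exists y, inAdj a b (ratr c) y) -> c <= c0.

(* a_i is a core normal: <a_i, y> = b_i - c0 for all y in core P = P^(c0) *)
Definition core_normal (R : realFieldType) (n d : nat)
  (a : 'I_n -> 'rV[int]_d) (b : 'I_n -> R) (c0 : rat) (i : 'I_n) : Prop :=
  forall y, inAdj a b (ratr c0) y -> dotv (intv R (a i)) y = b i - ratr c0.

(* Main.v *)
Require Import Defs.
From HB Require Import structures.
From mathcomp Require Import all_boot all_order all_algebra.
Import Order.TTheory GRing.Theory Num.Theory.
Local Open Scope ring_scope.

Lemma dotv_sum (R : realFieldType) (d : nat) (I : finType) (l : I -> R)
  (v : I -> 'rV[R]_d) (x : 'rV[R]_d) :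
  dotv (\sum_i l i *: v i) x = \sum_i l i * dotv (v i) x.
Proof.
rewrite /dotv.
under eq_bigr => k _ do rewrite summxE big_distrl /=.
rewrite exchange_big /=; apply: eq_bigr => i _.
rewrite mulr_sumr; apply: eq_bigr => k _.
by rewrite mxE mulrA.
Qed.

Theorem lemma3p5 (R : realFieldType) (n d : nat)
  (a : 'I_n -> 'rV[int]_d) (b : 'I_n -> R) (c0 : rat) :
  lattice_polytope a b -> full_dim a b -> irredundant a b ->
  (forall i, primitive (a i)) ->
  is_qcd_inv a b c0 ->
  forall j : 'I_n, core_normal a b c0 j ->
  ~ exists lam : 'I_n -> R,
      [/\ forall k, 0 <= lam k,
          forall k, lam k != 0 -> core_normal a b c0 k /\ k != j,
          \sum_k lam k = 1 &
          intv R (a j) = \sum_k lam k *: intv R (a k)].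
Proof.
move=> _ _ Hirr _ [_ [[y Hy] _]] j Hj [lam [Hl0 Hlc Hl1 Hrep]].
set c : R := ratr c0.
have Eb : b j = \sum_k lam k * b k.
  have := Hj y Hy; rewrite Hrep dotv_sum.
  have -> : \sum_k lam k * dotv (intv R (a k)) y = \sum_k lam k * (b k - c).
    apply: eq_bigr => k _.
    have [->|nz] := eqVneq (lam k) 0; first by rewrite !mul0r.
    by have [Hk _] := Hlc k nz; rewrite (Hk y Hy).
  under eq_bigr do rewrite mulrBr.
  rewrite sumrB -mulr_suml Hl1 mul1r => /(congr1 (fun t => t + c)).
  by rewrite !subrK.
have [x [Hx Hlt]] := Hirr j.
move: Hlt; rewrite Hrep dotv_sum Eb ltNge; apply/negP/negPn.
apply: ler_sum => k _.
have [->|nz] := eqVneq (lam k) 0; first by rewrite !mul0r.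
have [_ Hkj] := Hlc k nz.
by apply: ler_wpM2l; [exact: Hl0 | exact: Hx].
Qed.
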